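(* Let $\mathbb{A}$ be a medial generic isospectral algebra of dimension $n$ over an algebraically closed subfield $\mathbb{K}$ of $\mathbb{C}$, let $\epsilon_n=e^{2\pi\sqrt{-1}/n}$, let $c$ be a nonzero idempotent and let $w_1\neq0$ satisfy $cw_1=\epsilon_nw_1$. Then every nonassociative monomial $w_1^{\alpha}$ in $w_1$ satisfies $w_1^{\alpha}=\epsilon_n^s\,w_1^{\deg w_1^\alpha}$ for some integer $0\le s\le n-1$ (the right side being a principal power), and for all $k,m\ge1$, $$w_1^kw_1^m=\epsilon_n^{-(k-1)(m-1)}\,w_1^{k+m}.$$
   Context: All algebras commutative, possibly nonassociative, finite-dimensional. Medial: $(xy)(zw)=(xz)(yw)$ identically. Isospectral: all nonzero idempotents $c$ have the same spectrum (multiset of eigenvalues of $L_c:x\mapsto cx$). Generic: the complexification has exactly $2^n$ idempotents (including $0$). Principal powers: $z^1=z$, $z^{k+1}=z\,z^k$. A nonassociative monomial in $z$ is an element of the commutative multiplicative groupoid generated by $z$; its degree is the number of occurrences of $z$ (e.g. $\deg z^2z^2=4$). *)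

(* Defs.v *)
From HB Require Import structures.
From mathcomp Require Import all_boot all_order all_algebra.
Set Implicit Arguments. Unset Strict Implicit. Unset Printing Implicit Defensive.
Import Order.TTheory GRing.Theory Num.Theory.
Local Open Scope ring_scope.

Section Alg.
Variables (K : numClosedFieldType) (n : nat).
Variable mul : 'rV[K]_n -> 'rV[K]_n -> 'rV[K]_n.

Definition bilinear_comm_product : Prop :=
  (forall x y, mul x y = mul y x) /\
  (forall (a : K) x y z, mul (a *: x + y) z = a *: mul x z + mul y z).

Definition medial : Prop :=
  forall x y z w, mul (mul x y) (mul z w) = mul (mul x z) (mul y w).

Definition is_idempotent (c : 'rV[K]_n) : Prop := mul c c = c.

(* spectrum of L_c : x |-> c x, as a multiset of eigenvalues = its
   characteristic polynomial (K algebraically closed) *)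
Definition spectrum (c : 'rV[K]_n) : {poly K} :=
  char_poly (lin1_mx (fun x => mul c x)).

Definition isospectral : Prop :=
  forall c d, c != 0 -> d != 0 -> is_idempotent c -> is_idempotent d ->
    spectrum c = spectrum d.

Definition generic : Prop :=
  exists s : seq 'rV[K]_n, [/\ uniq s, size s = (2 ^ n)%N &
    forall x, is_idempotent x <-> x \in s].

(* principal powers: ppow z 1 = z, ppow z k.+1 = z * ppow z k
   (ppow z 0 := 0 is a dummy value, never used) *)
Fixpoint ppow (z : 'rV[K]_n) (k : nat) : 'rV[K]_n :=
  match k with
  | 0 => 0
  | 1 => z
  | k'.+1 => mul z (ppow z k')
  end.

End Alg.

Inductive monomial : Type :=
| mX : monomial
| mM : monomial -> monomial -> monomial.

Fixpoint mdeg (a : monomial) : nat :=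
  match a with mX => 1%N | mM a b => (mdeg a + mdeg b)%N end.

Fixpoint meval (K : numClosedFieldType) (n : nat)
  (mul : 'rV[K]_n -> 'rV[K]_n -> 'rV[K]_n) (z : 'rV[K]_n) (a : monomial)
  : 'rV[K]_n :=
  match a with mX => z | mM a b => mul (meval mul z a) (meval mul z b) end.

(* eps_n = exp(2 pi i / n) : square of the principal n-th root of -1 *)
Definition epsn (K : numClosedFieldType) (n : nat) : K := (n.-root (-1)) ^+ 2.

(* Main.v *)
Require Import Defs.
From HB Require Import structures.
From mathcomp Require Import all_boot all_order all_algebra.
From mathcomp Require Import zify.
Import Order.TTheory GRing.Theory Num.Theory.
Local Open Scope ring_scope.

Theorem proposition6p4 (K : numClosedFieldType) (n : nat)
  (mul : 'rV[K]_n -> 'rV[K]_n -> 'rV[K]_n) :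
  bilinear_comm_product mul -> medial mul -> generic mul -> isospectral mul ->
  forall (c w1 : 'rV[K]_n),
    c != 0 -> is_idempotent mul c ->
    w1 != 0 -> mul c w1 = epsn K n *: w1 ->
    (forall a : monomial, exists2 s : nat, (s <= n - 1)%N &
        meval mul w1 a = (epsn K n ^+ s) *: ppow mul w1 (mdeg a)) /\
    (forall k m : nat, (1 <= k)%N -> (1 <= m)%N ->
        mul (ppow mul w1 k) (ppow mul w1 m)
        = (epsn K n ^- ((k - 1) * (m - 1))) *: ppow mul w1 (k + m)).
Proof.
move=> [mC mL] mM _ _ c w cn0 cid _ cw.
have n0 : (0 < n)%N.
  case: n mul mC mL mM c w cn0 cid cw => // mul mC mL mM c w cn0.
  by rewrite thinmx0 eqxx in cn0.
set e := epsn K n in cw *.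
have en : e ^+ n = 1.
  by rewrite /e /epsn exprAC rootCK // sqrrN expr1n.
have e0 : e != 0.
  apply/eqP => E; move: en; rewrite E expr0n gtn_eqF //= => /eqP.
  by rewrite eq_sym oner_eq0.
have m0l : forall z, mul 0 z = 0.
  move=> z; have := mL 1 0 0 z; rewrite scale1r addr0 => H.
  by apply: (addrI (mul 0 z)); rewrite addr0 {3}H scale1r.
have mZl : forall a x y, mul (a *: x) y = a *: mul x y.
  by move=> a x y; rewrite -[a *: x]addr0 mL m0l addr0.
have mZr : forall a x y, mul x (a *: y) = a *: mul x y.
  by move=> a x y; rewrite mC mZl mC.
have mM2 : forall x y z u, mul (mul x y) (mul z u) = mul (mul x u) (mul z y).
  by move=> x y z u; rewrite [mul z u]mC mM [mul y z]mC.
have pS : forall k, ppow mul w k.+2 = mul w (ppow mul w k.+1) by [].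
have cp : forall k, mul c (ppow mul w k.+1) = e ^+ k.+1 *: ppow mul w k.+1.
  elim=> [|k IH]; first by rewrite expr1.
  by rewrite pS -{1}cid mM cw IH mZl mZr scalerA -exprS.
have A : forall i, e ^+ i *: mul (ppow mul w 2) (ppow mul w i.+1) = ppow mul w i.+3.
  move=> i; apply: (scalerI e0).
  rewrite scalerA -exprS.
  rewrite [in RHS]pS -[RHS]mZl -cw pS mM2 cp mZl [mul _ (mul w w)]mC //.
have P : forall k m, e ^+ (k * m) *: mul (ppow mul w k.+1) (ppow mul w m.+1)
                     = ppow mul w (k + m).+2.
  elim=> [|k IH] m; first by rewrite mul0n scale1r.
  case: m => [|m].
    by rewrite muln0 scale1r mC addn0.
  rewrite [ppow mul w k.+2]pS [ppow mul w m.+2]pS mM.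
  have := IH m => H.
  have -> : ((k.+1 * m.+1) = (k + m).+1 + (k * m))%N by rewrite mulSn mulnS; lia.
  rewrite exprD -scalerA -mZr H A; congr ppow; lia.
have P' : forall k m, mul (ppow mul w k.+1) (ppow mul w m.+1)
                     = e ^+ ((n - 1) * (k * m)) *: ppow mul w (k + m).+2.
  move=> k m; rewrite -P scalerA -exprD.
  have -> : ((n - 1) * (k * m) + k * m = (k * m) * n)%N.
    by rewrite mulnBl mul1n mulnC subnK // leq_pmulr.
  by rewrite mulnC exprM en expr1n scale1r.
split.
  have G : forall a, exists s, meval mul w a = e ^+ s *: ppow mul w (mdeg a).
    elim=> [|a [s1 H1] b [s2 H2]]; first by exists 0%N; rewrite scale1r.
    have da : (0 < mdeg a)%N by elim: a {H1} => //= x Hx y Hy; lia.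
    have db : (0 < mdeg b)%N by elim: b {H2} => //= x Hx y Hy; lia.
    rewrite /= H1 H2 mZl mZr scalerA -exprD.
    case: (mdeg a) da => // da _; case: (mdeg b) db => // db _.
    rewrite P' scalerA -exprD; eexists; congr (_ *: ppow _ _ _); lia.
  move=> a; have [s ->] := G a; exists (s %% n)%N.
    by have := ltn_pmod s n0; lia.
  by rewrite {1}(divn_eq s n) exprD mulnC exprM en expr1n mul1r.
move=> [|k] [|m] // _ _.
rewrite !subn1 !succnK addSn addnS -P scalerA mulVf ?scale1r //.
by rewrite expf_neq0.
Qed.
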